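(* Let $G$ be a $6$-regular graph, $\mathcal S$ a canonical path partition of $G$, and $P$ a path component with end-vertices $o_1,o_2$. Let $x_1,x_2\in V_2$ be path neighbors on $P$, with $x_1$ immediately preceding $x_2$ when $P$ is traversed from $o_1$ to $o_2$. If $x_1$ goes to a vertex of a cycle component $C$, then every vertex that $x_2$ goes to is either $o_2$ or a vertex of $C$.
   Context: All graphs are finite, simple and undirected. A path partition of $G=(V,E)$ is a set of vertex-disjoint paths (single vertices allowed) covering $V$; its members are components. A component with $t\ge3$ vertices is a cycle component if the subgraph induced on its vertex set has a spanning cycle; a one-vertex component is an isolated vertex; every other component is a path component. A path partition is canonical if (1) it has the minimum number of components among all path partitions of $G$; (2) among those, it has the maximum number of cycle components; (3) it has no isolated vertices. Given a canonical path partition $\mathcal S$ of $G$: two vertices are path neighbors if they are consecutive on a path component. An edge of $G$ is a free edge unless it joins two path neighbors or has both endpoints in the same cycle component. $V_1$ is the set of end-vertices of path components together with all vertices of cycle components. $V_2$ is the set of vertices not in $V_1$ that are joined by a free edge to a vertex of $V_1$. A balanced edge is a free edge with one endpoint in $V_1$ and the other in $V_2$; for $x\in V_2$, $y\in V_1$ we say $x$ goes to $y$ if $xy$ is a balanced edge. *)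

(* Defs.v *)
(* A finite simple graph is a symmetric irreflexive relation
   [e : rel T] on a finite type [T]. *)
From mathcomp Require Import all_boot.
Set Implicit Arguments. Unset Strict Implicit. Unset Printing Implicit Defensive.

Section PathPartitions.
Variables (T : finType) (e : rel T).

Definition is_gpath (s : seq T) : bool :=
  if s is x :: s' then uniq s && path e x s' else false.

(* A path partition: a list of vertex-disjoint paths covering V.  Since the
   components are nonempty, [uniq (flatten S)] gives vertex-disjointness
   (and that no component is listed twice). *)
Definition is_path_partition (S : seq (seq T)) : Prop :=
  all is_gpath S /\ uniq (flatten S) /\ (forall v : T, v \in flatten S).

(* Cycle component: at least 3 vertices, and the subgraph induced on its
   vertex set has a spanning cycle, i.e. some arrangement of its vertices
   is an e-cycle (closing edge included). *)
Definition is_cycle_comp (s : seq T) : bool :=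
  (3 <= size s) && has (cycle e) (permutations s).

Definition is_isolated_comp (s : seq T) : bool := size s == 1.

Definition is_path_comp (s : seq T) : bool :=
  (2 <= size s) && ~~ is_cycle_comp s.

Definition num_cycle_comps (S : seq (seq T)) : nat := count is_cycle_comp S.

Definition canonical_pp (S : seq (seq T)) : Prop :=
  [/\ is_path_partition S,
      (forall S', is_path_partition S' -> size S <= size S'),
      (forall S', is_path_partition S' -> size S' = size S ->
                  num_cycle_comps S' <= num_cycle_comps S)
    & ~~ has is_isolated_comp S].

Definition path_nbrs (S : seq (seq T)) (u v : T) : Prop :=
  exists2 s, s \in S & is_path_comp s /\
    exists i, i.+1 < size s /\
      ((nth u s i = u /\ nth u s i.+1 = v) \/ (nth u s i = v /\ nth u s i.+1 = u)).

Definition same_cycle_comp (S : seq (seq T)) (u v : T) : Prop :=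
  exists2 s, s \in S & [&& is_cycle_comp s, u \in s & v \in s].

Definition free_edge (S : seq (seq T)) (u v : T) : Prop :=
  e u v /\ ~ path_nbrs S u v /\ ~ same_cycle_comp S u v.

Definition inV1 (S : seq (seq T)) (v : T) : Prop :=
  exists2 s, s \in S &
    (is_path_comp s && ((v == head v s) || (v == last v s)))
    || (is_cycle_comp s && (v \in s)).

Definition inV2 (S : seq (seq T)) (x : T) : Prop :=
  ~ inV1 S x /\ exists y, inV1 S y /\ free_edge S x y.

Definition balanced_edge (S : seq (seq T)) (u v : T) : Prop :=
  free_edge S u v /\ ((inV1 S u /\ inV2 S v) \/ (inV2 S u /\ inV1 S v)).

Definition goes_to (S : seq (seq T)) (x y : T) : Prop :=
  inV2 S x /\ inV1 S y /\ balanced_edge S x y.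

End PathPartitions.

(* Main.v *)
Require Import Defs.
From mathcomp Require Import all_boot.
From mathcomp Require Import zify.
Set Implicit Arguments. Unset Strict Implicit. Unset Printing Implicit Defensive.

Section Aux.
Variables (T : finType) (e : rel T).
Hypothesis e_sym : symmetric e.

Definition pth (s : seq T) : bool := if s is x :: s' then path e x s' else false.

Lemma gpathE s : is_gpath e s = uniq s && pth s.
Proof. by case: s. Qed.

Lemma pth_cat s1 s2 x0 y0 : pth s1 -> pth s2 -> e (last x0 s1) (head y0 s2) -> pth (s1 ++ s2).
Proof.
case: s1 => [|a s1] //= H1; case: s2 => [|b s2] //= H2 He.
by rewrite cat_path H1 /= He H2.
Qed.

Lemma pth_cat_inv s1 s2 : s1 != [::] -> s2 != [::] -> pth (s1 ++ s2) -> pth s1 /\ pth s2.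
Proof.
case: s1 => [|a s1] //= _; case: s2 => [|b s2] //= _.
by rewrite cat_path /= => /and3P[-> _ ->].
Qed.

Lemma pth_rev s : pth s -> pth (rev s).
Proof.
case: s => [|x p] // H.
rewrite (lastI x p) rev_rcons /= rev_path.
by rewrite (@eq_path _ _ e (fun u v => e_sym v u)).
Qed.

Lemma last_rev (x : T) s : last x (rev s) = head x s.
Proof. by case: s => // a s; rewrite rev_cons last_rcons. Qed.

Lemma head_rev (x : T) s : head x (rev s) = last x s.
Proof. by case: s => // a s; rewrite [in LHS](lastI a s) rev_rcons. Qed.

Lemma uniq_flatten_mem (N : seq (seq T)) s : s \in N -> uniq (flatten N) -> uniq s.
Proof.
elim: N => //= a N IH; rewrite in_cons cat_uniq => /orP[/eqP-> | Hs] /and3P[Ha _ HN] //.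
exact: IH.
Qed.

Lemma replace_pp S K R N : is_path_partition e S -> perm_eq S (K ++ R) -> all pth N ->
  perm_eq (flatten N) (flatten K) -> is_path_partition e (N ++ R).
Proof.
move=> [Hall [Hu Hcov]] HSK HN HNK.
have Hf : perm_eq (flatten (N ++ R)) (flatten S).
  rewrite perm_sym (perm_trans (perm_flatten HSK)) // !flatten_cat perm_cat2r perm_sym //.
have HuN : uniq (flatten (N ++ R)) by rewrite (perm_uniq Hf).
split; last split => //; last by move=> v; rewrite (perm_mem Hf).
apply/allP => s; rewrite mem_cat => /orP[Hs|Hs].
  rewrite gpathE (allP HN _ Hs) andbT; apply: (uniq_flatten_mem (N := N ++ R)).
    by rewrite mem_cat Hs.
  done.
apply: (allP Hall); rewrite (perm_mem HSK) mem_cat Hs orbT //.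
Qed.

Lemma perm_remove (S K : seq (seq T)) : uniq K -> all (mem S) K -> exists R, perm_eq S (K ++ R).
Proof.
elim: K S => [|a K IH] S /=; first by exists S.
move=> /andP[HaK HK] /andP[HaS HKS].
have Hp := perm_to_rem HaS.
have [R HR] : exists R, perm_eq (rem a S) (K ++ R).
  apply: IH => //; apply/allP => b Hb.
  have : b \in a :: rem a S by rewrite -(perm_mem Hp); apply: (allP HKS).
  rewrite in_cons => /orP[/eqP Hba|] //.
  by move: HaK; rewrite -Hba Hb.
exists R; apply: (perm_trans Hp); by rewrite perm_cons.
Qed.

Lemma cyc_start C c : is_cycle_comp e C -> c \in C -> exists r, perm_eq C (c :: r) /\ path e c r.
Proof.
move=> /andP[_ /hasP[Cc]]; rewrite mem_permutations => HCc Hcyc Hc.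
have HcC : c \in Cc by rewrite (perm_mem HCc).
case: (rot_to HcC) => i r Hr.
exists r; split.
  by rewrite -Hr perm_sym (perm_rot i Cc).
have : cycle e (rot i Cc) by rewrite rot_cycle.
by rewrite Hr /= rcons_path => /andP[].
Qed.

Lemma head_catl (s1 s2 : seq T) z : s1 != [::] -> head z (s1 ++ s2) = head z s1.
Proof. by case: s1. Qed.

End Aux.

Lemma add4 a b c d : a + b + (c + d) = a + d + (b + c).
Proof. lia. Qed.

Theorem mainTheorem8 (T : finType) (e : rel T)
  (e_sym : symmetric e) (e_irr : irreflexive e)
  (e_reg : forall v : T, #|[set w | e v w]| = 6)
  (S : seq (seq T)) (HS : canonical_pp e S)
  (P : seq T) (HP : P \in S \/ rev P \in S) (HPpath : is_path_comp e P)
  (o1 o2 : T) (Ho1 : head o1 P = o1) (Ho2 : last o2 P = o2)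
  (x1 x2 : T) (Hx1 : inV2 e S x1) (Hx2 : inV2 e S x2)
  (Hprec : exists i, i.+1 < size P /\ nth x1 P i = x1 /\ nth x1 P i.+1 = x2)
  (C : seq T) (HC : C \in S) (HCcyc : is_cycle_comp e C)
  (Hgo : exists2 c, c \in C & goes_to e S x1 c) :
  forall y : T, goes_to e S x2 y -> y = o2 \/ y \in C.
Proof.
move=> y Hy.
case: HS => HSpp Hmin _ _.
have HSpp' := HSpp; case: HSpp' => Hall [Hu Hcov].
have final : forall K N, uniq K -> all (mem S) K -> all (pth e) N ->
    perm_eq (flatten N) (flatten K) -> size N < size K -> False.
  move=> K N HK HKS HN HNK Hsz; case: (perm_remove HK HKS) => R HR.
  have := Hmin _ (replace_pp HSpp HR HN HNK).
  by rewrite size_cat (perm_size HR) size_cat leq_add2r leqNgt Hsz.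
have [Pc [HPcS HPcP]] : exists Pc, Pc \in S /\ (Pc = P \/ Pc = rev P).
  by case: HP => H; [exists P; split; [|left] | exists (rev P); split; [|right]].
case: Hprec => i [Hi [Hn1 Hn2]].
have HPdec : P = (take i P ++ [:: x1]) ++ x2 :: drop i.+2 P.
  rewrite -catA /= -{1}(cat_take_drop i P); congr (_ ++ _).
  rewrite (drop_nth x1) ?Hn1; last by apply: ltnW.
  by rewrite (drop_nth x1) ?Hn2.
have Hx1P : x1 \in P by rewrite HPdec !mem_cat !inE eqxx ?orbT.
have Hx2P : x2 \in P by rewrite HPdec !mem_cat !inE eqxx ?orbT.
have HPne : P != [::] by rewrite HPdec; case: (take i P).
have HAne : take i P ++ [:: x1] != [::] by case: (take i P).
have HBne : x2 :: drop i.+2 P != [::] by [].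
have HlA : forall z, last z (take i P ++ [:: x1]) = x1 by move=> z; rewrite last_cat.
have HhB : forall z, head z (x2 :: drop i.+2 P) = x2 by [].
move: HPdec HAne HBne HlA HhB.
move: (take i P ++ [:: x1]) (x2 :: drop i.+2 P) => A B HPdec HAne HBne HlA HhB.
have HpPc : pth e Pc by move: (allP Hall _ HPcS); rewrite gpathE => /andP[].
have HpP : pth e P.
  by case: HPcP => E; move: HpPc; rewrite E // => /(pth_rev e_sym); rewrite revK.
have [HpA HpB] : pth e A /\ pth e B by apply: pth_cat_inv => //; rewrite -HPdec.
have HcntP : forall p, count p Pc = count p A + count p B.
  by move=> p; case: HPcP => ->; rewrite ?count_rev HPdec count_cat.
have HmemPc : forall z, z \in P -> z \in Pc.
  by move=> z Hz; case: HPcP => ->; rewrite ?mem_rev.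
have Hx1Pc : x1 \in Pc by apply: HmemPc.
have Hx2Pc : x2 \in Pc by apply: HmemPc.
case: Hgo => c HcC [_ [_ [[He1 [_ Hnsc1]] _]]].
case: Hy => _ [HyV1 [[He2 [_ Hnsc2]] _]].
have HPcC : Pc != C.
  apply/eqP => E; apply: Hnsc1; exists C => //.
  by rewrite HCcyc -E Hx1Pc /= E.
have [r [HCr Hpr]] := cyc_start HCcyc HcC.
have HcntC : forall p, count p C = count p (c :: r) by apply/permP.
have Hp1 : pth e (A ++ c :: r).
  by apply: (pth_cat (x0 := x1) (y0 := c)) => //; rewrite HlA.
case: (boolP (y \in C)) => HyC; first by right.
left; case: (y =P o2) => // Hyo2; exfalso.
have key : forall Q Q', Q \in S -> Q != C -> Q != Pc -> pth e Q' -> last y Q' = y ->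
    (forall p, count p Q' = count p Q) -> False.
  move=> Q Q' HQS HQC HQPc HpQ' HlQ' HcQ.
  apply: (final [:: Pc; C; Q] [:: A ++ c :: r; Q' ++ B]).
  - by rewrite /= !inE negb_or HPcC eq_sym HQPc eq_sym HQC.
  - by rewrite /= HPcS HC HQS.
  - rewrite /= Hp1 andbT; apply: (pth_cat (x0 := y) (y0 := y)) => //.
    by rewrite HlQ' HhB e_sym.
  - apply/permP => p; change (count p ((A ++ c :: r) ++ ((Q' ++ B) ++ [::])) = count p (Pc ++ (C ++ (Q ++ [::])))).
    rewrite !cats0 !count_cat HcntP HcntC HcQ; apply: add4.
  - by [].
case: HyV1 => Q HQS /orP[/andP[HQpath HQend] | /andP[HQcyc HyQ]]; last first.
  have HQC : Q != C by apply/eqP => E; move: HyC; rewrite -E HyQ.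
  have HQPc : Q != Pc.
    apply/eqP => E; apply: Hnsc2; exists Q => //.
    by rewrite HQcyc HyQ E Hx2Pc.
  have [rD [HQr HprD]] := cyc_start HQcyc HyQ.
  apply: (key Q (rev (y :: rD))) => //.
  - exact: pth_rev.
  - by rewrite last_rev.
  - by move=> p; rewrite count_rev; apply/esym/permP.
have HQC : Q != C.
  by apply/eqP => E; move: HQpath; rewrite /is_path_comp E HCcyc andbF.
have HpQ : pth e Q by move: (allP Hall _ HQS); rewrite gpathE => /andP[].

have Hh : forall z, head z P = o1.
  by move=> z; rewrite -[RHS]Ho1; move: HPne; case: (P).
have Hl : forall z, last z P = o2.
  by move=> z; rewrite -[RHS]Ho2; move: HPne; case: (P).
case: (eqVneq Q Pc) => HQPc; last first.
  case/orP: HQend => /eqP Hyend.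
  - apply: (key Q (rev Q)) => //.
    + exact: pth_rev.
    + by rewrite last_rev -Hyend.
    + by move=> p; rewrite count_rev.
  - by apply: (key Q Q) => //; rewrite -Hyend.
(* y is an end of P, hence y = o1 *)
have Hyo1 : y = o1.
  move: HQend; rewrite HQPc; case: HPcP => -> /orP[] /eqP Hy'; move: Hy';
    rewrite ?head_rev ?last_rev ?Hh ?Hl // => Hy'; by case: Hyo2.
have HhA : forall z, head z A = o1.
  by move=> z; rewrite -(Hh z) HPdec head_catl.
apply: (final [:: Pc; C] [:: rev (c :: r) ++ (rev A ++ B)]).
- by rewrite /= !inE HPcC.
- by rewrite /= HPcS HC.
- rewrite /= andbT; apply: (pth_cat (x0 := c) (y0 := c)).
  + exact: pth_rev.
  + apply: (pth_cat (x0 := c) (y0 := c)) => //; first exact: pth_rev.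
    by rewrite last_rev HhA -Hyo1 HhB e_sym.
  + rewrite last_rev /= head_catl; last by rewrite -size_eq0 size_rev size_eq0.
    by rewrite head_rev HlA e_sym.
- apply/permP => p; change (count p ((rev (c :: r) ++ (rev A ++ B)) ++ [::]) = count p (Pc ++ (C ++ [::]))).
  rewrite !cats0 !count_cat !count_rev HcntP HcntC; apply: addnC.
- by [].
Qed.
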